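(* For every constant $c>0$ there exist a finite password set $\mathcal{P}$ and a probability distribution $\mathcal{D}$ over rankings of $\mathcal{P}$ such that for every nonempty policy $\mathcal{A}\subseteq\mathcal{P}$ there exist a nonempty policy $\mathcal{A}'\subseteq\mathcal{P}$ and $k\in\mathbb{N}$ with $p(k,\mathcal{A})>c\cdot p(k,\mathcal{A}')$.
   Context: A ranking is a total order of $\mathcal{P}$. Ranking model: under policy $\mathcal{A}\subseteq\mathcal{P}$, $\Pr[w\mid\mathcal{A}]$ is the probability that a ranking drawn from $\mathcal{D}$ has $w$ as its most preferred password among those in $\mathcal{A}$. $p(k,\mathcal{A})$ is the maximum of $\sum_{w\in W}\Pr[w\mid\mathcal{A}]$ over $W\subseteq\mathcal{A}$ with $|W|\le k$ (the total probability of the $k$ most likely allowed passwords). Policies are arbitrary subsets of $\mathcal{P}$ (singleton rules setting). *)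

(* Defs.v *)
From HB Require Import structures.
From mathcomp Require Import all_boot all_order all_algebra all_fingroup.
From mathcomp Require Import reals.
Set Implicit Arguments. Unset Strict Implicit. Unset Printing Implicit Defensive.
Import Order.TTheory GRing.Theory Num.Theory.
Local Open Scope ring_scope.

(* Password set P = 'I_n.  A ranking is a permutation s : {perm 'I_n};
   s w is the position (rank) of password w, smaller = more preferred. *)

Definition is_dist (R : realType) (n : nat) (D : {ffun {perm 'I_n} -> R}) : Prop :=
  (forall s, 0 <= D s) /\ \sum_(s : {perm 'I_n}) D s = 1.

Definition best (n : nat) (s : {perm 'I_n}) (A : {set 'I_n}) (w : 'I_n) : bool :=
  (w \in A) && [forall v in A, (s w <= s v)%N].

Definition prA (R : realType) (n : nat) (D : {ffun {perm 'I_n} -> R})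
    (A : {set 'I_n}) (w : 'I_n) : R :=
  \sum_(s : {perm 'I_n} | best s A w) D s.

Definition pk (R : realType) (n : nat) (D : {ffun {perm 'I_n} -> R})
    (k : nat) (A : {set 'I_n}) : R :=
  \big[Num.max/0]_(W : {set 'I_n} | (W \subset A) && (#|W| <= k)%N)
     \sum_(w in W) prA D A w.

(* Main.v *)
Require Import Defs.
From HB Require Import structures.
From mathcomp Require Import all_boot all_order all_algebra all_fingroup.
From mathcomp Require Import reals.
From mathcomp Require Import zify ring lra.
Import Order.TTheory GRing.Theory Num.Theory.
Set Implicit Arguments. Unset Strict Implicit. Unset Printing Implicit Defensive.
Local Open Scope ring_scope.

Lemma rank_lt n (key : 'I_n -> nat) (x : 'I_n) :
  (#|[set v | (key v < key x)%N]| < n)%N.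
Proof.
rewrite -[X in (_ < X)%N]card_ord -cardsT; apply: proper_card.
apply/properP; split; first exact: subsetT.
by exists x; rewrite ?inE ?ltnn.
Qed.

Definition rankf n (key : 'I_n -> nat) (x : 'I_n) : 'I_n := Ordinal (rank_lt key x).

Lemma rankf_mono n (key : 'I_n -> nat) x y :
  (key x < key y)%N -> (rankf key x < rankf key y)%N.
Proof.
move=> lt; rewrite /rankf /=; apply: proper_card; apply/properP; split.
  apply/subsetP => v; rewrite !inE => H; exact: ltn_trans H lt.
by exists x; rewrite !inE ?ltnn.
Qed.

Lemma rankf_inj n (key : 'I_n -> nat) : injective key -> injective (rankf key).
Proof.
move=> ik x y E; case: (ltngtP (key x) (key y)) => H.
- by have := rankf_mono H; rewrite E ltnn.
- by have := rankf_mono H; rewrite E ltnn.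
- exact: ik.
Qed.

Definition rank_perm n (key : 'I_n -> nat) (ik : injective key) : {perm 'I_n} :=
  perm (rankf_inj ik).

Lemma rank_permE n (key : 'I_n -> nat) (ik : injective key) w v :
  (rank_perm ik w <= rank_perm ik v)%N = (key w <= key v)%N.
Proof.
rewrite /rank_perm !permE.
case: (ltngtP (key w) (key v)) => H.
- by rewrite ltnW // rankf_mono.
- by apply/negbTE; rewrite -ltnNge rankf_mono.
- by rewrite (ik _ _ H) leqnn.
Qed.

Lemma best_rankE n (key : 'I_n -> nat) (ik : injective key) A w :
  best (rank_perm ik) A w = (w \in A) && [forall v in A, (key w <= key v)%N].
Proof.
rewrite /best; congr (_ && _); apply: eq_forallb => v.
by rewrite rank_permE.
Qed.

Lemma exists_best n (s : {perm 'I_n}) (A : {set 'I_n}) x0 : x0 \in A -> exists w, best s A w.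
Proof.
move=> x0A; case: (arg_minnP (fun x => nat_of_ord (s x)) x0A) => w wA wmin.
exists w; rewrite /best; apply/andP; split => //; apply/forall_inP => v vA; exact: wmin.
Qed.

Section Gen.
Variable R : realType.

Lemma sum_prA_ge1 n (D : {ffun {perm 'I_n} -> R}) (A : {set 'I_n}) :
  is_dist D -> A != set0 -> 1 <= \sum_(w in A) prA D A w.
Proof.
move=> [D0 D1] /set0Pn [x0 x0A].
rewrite /prA (eq_bigr (fun w => \sum_s (if best s A w then D s else 0))); last first.
  by move=> w _; rewrite big_mkcond.
rewrite exchange_big /= -D1; apply: ler_sum => s _.
have [w bw] := exists_best s x0A.
have wA : w \in A by move: bw; rewrite /best => /andP[].
rewrite (bigD1 w) //= bw lerDl; apply: sumr_ge0 => v _; case: ifP => //.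
Qed.

Lemma pk_ge n (D : {ffun {perm 'I_n} -> R}) k (A W : {set 'I_n}) :
  W \subset A -> (#|W| <= k)%N -> \sum_(w in W) prA D A w <= pk D k A.
Proof.
move=> WA Wk; rewrite /pk.
have := @le_bigmax_cond _ _ _ (0:R) W (fun W : {set 'I_n} => (W \subset A) && (#|W| <= k)%N) (fun W : {set 'I_n} => \sum_(w in W) prA D A w).
by rewrite WA Wk => /(_ isT).
Qed.

Lemma pk_le n (D : {ffun {perm 'I_n} -> R}) k (A : {set 'I_n}) (a b : R) (w0 : 'I_n) :
  0 <= a -> 0 <= b ->
  (forall w, w \in A -> prA D A w <= b + (if w == w0 then a else 0)) ->
  pk D k A <= a + k%:R * b.
Proof.
move=> a0 b0 H; rewrite /pk; apply: bigmax_le.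
  by apply: addr_ge0 => //; apply: mulr_ge0.
move=> W /andP[WA Wk].
apply: (le_trans (y := \sum_(w in W) (b + (if w == w0 then a else 0)))).
  apply: ler_sum => w wW; apply: H; exact: (subsetP WA).
rewrite big_split /= sumr_const -[b *+ _]mulr_natl addrC; apply: lerD.
  apply: (le_trans (y := \sum_w (if w == w0 then a else 0))).
    rewrite [X in _ <= X](bigID (mem W)) /= lerDl; apply: sumr_ge0 => w _; case: ifP => //.
  rewrite (bigD1 w0) //= eqxx big1 ?addr0 // => w /negbTE -> //.
by apply: ler_wpM2r => //; rewrite ler_nat.
Qed.

Lemma sum_le_one (I : finType) (P : pred I) (F : I -> R) (B : R) :
  0 <= B -> (forall i, P i -> F i <= B) -> (forall i j, P i -> P j -> i = j) ->
  \sum_i (if P i then F i else 0) <= B.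
Proof.
move=> B0 FB U; case: (pickP P) => [i0 Pi0|nP].
  rewrite (bigD1 i0) //= Pi0 big1 ?addr0; first exact: FB.
  move=> j ji0; case: ifP => // Pj; by rewrite (U _ _ Pj Pi0) eqxx in ji0.
by rewrite big1 // => i _; rewrite nP.
Qed.

Lemma prA_mix n (I : finType) (sg : I -> {perm 'I_n}) (wt : I -> R) (A : {set 'I_n}) w :
  prA [ffun s => \sum_r (if sg r == s then wt r else 0)] A w =
  \sum_r (if best (sg r) A w then wt r else 0).
Proof.
rewrite /prA (eq_bigr (fun s => \sum_r (if sg r == s then wt r else 0))); last first.
  by move=> s _; rewrite ffunE.
rewrite big_mkcond /= (eq_bigr (fun s => \sum_r (if best s A w then (if sg r == s then wt r else 0) else 0))); last first.
  by move=> s _; case: ifP => // _; rewrite big1.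
rewrite exchange_big /=; apply: eq_bigr => r _.
rewrite (bigD1 (sg r)) //= eqxx big1 ?addr0; first by case: ifP.
by move=> s /negbTE; rewrite eq_sym => ->; case: ifP.
Qed.

Lemma is_dist_mix n (I : finType) (sg : I -> {perm 'I_n}) (wt : I -> R) :
  (forall r, 0 <= wt r) -> \sum_r wt r = 1 ->
  is_dist [ffun s => \sum_r (if sg r == s then wt r else 0)].
Proof.
move=> w0 w1; split.
  by move=> s; rewrite ffunE; apply: sumr_ge0 => r _; case: ifP.
rewrite (eq_bigr (fun s => \sum_r (if sg r == s then wt r else 0))); last first.
  by move=> s _; rewrite ffunE.
rewrite exchange_big /= -w1; apply: eq_bigr => r _.
rewrite (bigD1 (sg r)) //= eqxx big1 ?addr0 //.
by move=> s /negbTE; rewrite eq_sym => ->.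
Qed.
End Gen.

Definition keyf (M m a b x : nat) : nat :=
  if x == a then 0%N else if x == (M.+1 + b)%N then (2 * M + 2)%N else (2 * x + 1)%N.

Lemma keyf_inj M m a b : (a <= M)%N -> injective (keyf M m a b).
Proof.
move=> aM x y; rewrite /keyf.
case: (x =P a); case: (x =P (M.+1 + b)%N); case: (y =P a); case: (y =P (M.+1 + b)%N); lia.
Qed.

Lemma keyO_inj M m n a b : (a <= M)%N -> injective (fun x : 'I_n => keyf M m a b x).
Proof. by move=> aM x y /(keyf_inj aM) /val_inj. Qed.

Definition sig (M m : nat) (r : 'I_M.+1 * 'I_m) : {perm 'I_(M + m).+1} :=
  rank_perm (@keyO_inj M m (M + m).+1 r.1 r.2 (ltn_ord r.1 : (r.1 <= M)%N)).

Lemma best_sig M m r (A : {set 'I_(M + m).+1}) w :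
  best (sig r) A w = (w \in A) && [forall v in A, (keyf M m r.1 r.2 w <= keyf M m r.1 r.2 v)%N].
Proof. exact: best_rankE. Qed.

Lemma F1best M m (A : {set 'I_(M + m).+1}) w (b : 'I_m) :
  w \in A -> (w <= M)%N -> (forall v, v \in A -> (w <= v)%N) ->
  best (sig (ord0, b)) A w.
Proof.
move=> wA wM wmin; rewrite best_sig wA /=; apply/forall_inP => v vA.
have := wmin v vA; rewrite /keyf /=.
repeat (case: eqP => /= ?); lia.
Qed.

Lemma F2best M m r (y : 'I_(M + m).+1) :
  best (sig r) [set x : 'I_(M + m).+1 | (M < x)%N] y -> val y = (M.+1 + r.2)%N.
Proof.
rewrite best_sig inE => /andP[My /forall_inP H].
have vlt : (M.+1 + r.2 < (M + m).+1)%N by have := ltn_ord r.2; lia.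
set v : 'I_(M + m).+1 := Ordinal vlt.
have vY : v \in [set x : 'I_(M + m).+1 | (M < x)%N] by rewrite inE /=; lia.
have := H v vY; rewrite /keyf /=.
have := ltn_ord r.1.
repeat (case: eqP => /= ?); lia.
Qed.

Lemma F3best M m r (t : 'I_(M + m).+1) :
  best (sig r) [set x : 'I_(M + m).+1 | (x <= M)%N] t -> val t = val r.1.
Proof.
rewrite best_sig inE => /andP[tM /forall_inP H].
have vlt : (r.1 < (M + m).+1)%N by have := ltn_ord r.1; lia.
set v : 'I_(M + m).+1 := Ordinal vlt.
have vZ : v \in [set x : 'I_(M + m).+1 | (x <= M)%N] by rewrite inE /=; have := ltn_ord r.1; lia.
have := H v vZ; rewrite /keyf /= eqxx.
repeat (case: eqP => /= ?); lia.
Qed.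

Section W.
Variable R : realType.

Definition wa (K M : nat) (a : 'I_M.+1) : R :=
  if a == ord0 then K%:R^-1 else (1 - K%:R^-1) / M%:R.
Definition wt (K M m : nat) (r : 'I_M.+1 * 'I_m) : R := wa K r.1 / m%:R.
Definition Dmix (K M m : nat) : {ffun {perm 'I_(M + m).+1} -> R} :=
  [ffun s => \sum_r (if sig r == s then wt K r else 0)].

Lemma wa_ge0 K M a : (0 < K)%N -> 0 <= wa K (M:=M) a.
Proof.
move=> K0; rewrite /wa; case: ifP => _; first by rewrite invr_ge0 ler0n.
apply: divr_ge0; last by rewrite ler0n.
rewrite subr_ge0 invf_le1 ?ltr0n // ler1n //.
Qed.

Lemma sum_wa K M : (0 < M)%N -> \sum_a wa K (M:=M) a = 1.
Proof.
move=> M0; rewrite big_ord_recl /= /wa eqxx.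
rewrite (eq_bigr (fun _ => (1 - K%:R^-1) / M%:R)); last by move=> i _.
rewrite sumr_const card_ord -[(_ / _) *+ _]mulr_natl mulrC divfK ?pnatr_eq0 -?lt0n //.
by rewrite addrC subrK.
Qed.

Lemma sum_b K M m (a : 'I_M.+1) : (0 < m)%N -> \sum_(b < m) wt K (a, b) = wa K a.
Proof.
move=> m0; rewrite /wt /= sumr_const card_ord -[(_ / _) *+ _]mulr_natl mulrC divfK //.
by rewrite pnatr_eq0 -lt0n.
Qed.

Lemma Dmix_dist K M m : (0 < K)%N -> (0 < M)%N -> (0 < m)%N -> is_dist (Dmix K M m).
Proof.
move=> K0 M0 m0; apply: is_dist_mix.
  by move=> r; rewrite /wt; apply: divr_ge0; [exact: wa_ge0|exact: ler0n].
rewrite -(pair_bigA _ (fun (a : 'I_M.+1) (b : 'I_m) => wt K (a, b))) /=.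
rewrite -[RHS](sum_wa K M0); apply: eq_bigr => a _; exact: sum_b.
Qed.

Lemma prA_F1 K M m (A : {set 'I_(M + m).+1}) w :
  (0 < K)%N -> (0 < m)%N ->
  w \in A -> (w <= M)%N -> (forall v, v \in A -> (w <= v)%N) ->
  K%:R^-1 <= prA (Dmix K M m) A w.
Proof.
move=> K0 m0 wA wM wmin; rewrite /Dmix prA_mix.
apply: (le_trans (y := \sum_(r : 'I_M.+1 * 'I_m) (if r.1 == ord0 then wt K (r.1, r.2) else 0))); last first.
  apply: ler_sum => -[a b] _ /=; case: eqP => [->|_].
    by rewrite F1best.
  case: ifP => // _; rewrite /wt; apply: divr_ge0; [exact: wa_ge0|exact: ler0n].
rewrite -(pair_bigA _ (fun (a : 'I_M.+1) (b : 'I_m) => if a == ord0 then wt K (a, b) else 0)) /=.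
rewrite big_ord_recl /= sum_b // [X in _ + X]big1 ?addr0; first by rewrite /wa eqxx.
by move=> i _; rewrite big1_eq.
Qed.

Lemma prA_F2 K M m y :
  (0 < K)%N -> (0 < M)%N -> (0 < m)%N ->
  prA (Dmix K M m) [set x : 'I_(M + m).+1 | (M < x)%N] y <= m%:R^-1.
Proof.
move=> K0 M0 m0; rewrite /Dmix prA_mix.
apply: (le_trans (y := \sum_(r : 'I_M.+1 * 'I_m) (if val y == (M.+1 + r.2)%N then wt K (r.1, r.2) else 0))).
  apply: ler_sum => r _; case: ifP => [/F2best ->|_]; first by rewrite eqxx.
  case: ifP => // _; rewrite /wt; apply: divr_ge0; [exact: wa_ge0|exact: ler0n].
rewrite -(pair_bigA _ (fun (a : 'I_M.+1) (b : 'I_m) => if val y == (M.+1 + b)%N then wt K (a, b) else 0)) /=.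
apply: (le_trans (y := \sum_(a : 'I_M.+1) wa K a / m%:R)).
  apply: ler_sum => a _; apply: sum_le_one.
  - apply: divr_ge0; [exact: wa_ge0|exact: ler0n].
  - by move=> b _.
  - by move=> i j /eqP H1 /eqP H2; apply: ord_inj; lia.
by rewrite -mulr_suml sum_wa // mul1r.
Qed.

Lemma prA_F3 K M m t :
  (0 < K)%N -> (0 < M)%N -> (0 < m)%N ->
  prA (Dmix K M m) [set x : 'I_(M + m).+1 | (x <= M)%N] t <=
    (1 - K%:R^-1) / M%:R + (if t == ord0 then K%:R^-1 else 0).
Proof.
move=> K0 M0 m0; rewrite /Dmix prA_mix.
apply: (le_trans (y := \sum_(r : 'I_M.+1 * 'I_m) (if val t == val r.1 then wt K (r.1, r.2) else 0))).
  apply: ler_sum => r _; case: ifP => [/F3best ->|_]; first by rewrite eqxx.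
  case: ifP => // _; rewrite /wt; apply: divr_ge0; [exact: wa_ge0|exact: ler0n].
rewrite -(pair_bigA _ (fun (a : 'I_M.+1) (b : 'I_m) => if val t == val a then wt K (a, b) else 0)) /=.
rewrite (eq_bigr (fun a => if val t == val a then wa K a else 0)); last first.
  move=> a _; case: ifP => _; first exact: sum_b.
  by rewrite big1.
have a0 : 0 <= (1 - K%:R^-1 : R) / M%:R.
  apply: divr_ge0; last exact: ler0n.
  by rewrite subr_ge0 invf_le1 ?ltr0n // ler1n.
apply: sum_le_one.
- by apply: addr_ge0 => //; case: ifP => // _; rewrite invr_ge0 ler0n.
- move=> a /eqP ta; rewrite /wa; case: eqP => [a0E|an0].
    have -> : t == ord0 by apply/eqP/val_inj; rewrite ta a0E.
    by rewrite lerDr.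
  by rewrite lerDl; case: ifP => // _; rewrite invr_ge0 ler0n.
- by move=> i j /eqP H1 /eqP H2; apply: val_inj; rewrite -H1 -H2.
Qed.
End W.

Lemma card_le_m M m (A : {set 'I_(M + m).+1}) :
  (forall x, x \in A -> (M < x)%N) -> (#|A| <= m)%N.
Proof.
move=> HA; rewrite cardE -(size_map (@nat_of_ord _)); apply: (leq_trans (n := size (iota M.+1 m))); last by rewrite size_iota.
apply: uniq_leq_size; first by rewrite (map_inj_uniq (@ord_inj _)) enum_uniq.
move=> x /mapP [y]; rewrite mem_enum => yA ->; rewrite mem_iota.
have := HA y yA; have := ltn_ord y; lia.
Qed.

Theorem theoremB1 (R : realType) (c : R) :
  0 < c ->
  exists (n : nat) (D : {ffun {perm 'I_n} -> R}),
    (0 < n)%N /\ is_dist D /\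
    forall A : {set 'I_n}, A != set0 ->
      exists A' : {set 'I_n}, A' != set0 /\
        exists k : nat, c * pk D k A' < pk D k A.
Proof.
move=> c0.
have [K HK] : exists K : nat, 2 * (c + 1) < K%:R.
  by exists (Num.Def.archi_bound (2 * (c + 1))); apply: archi_boundP; lra.
have K2 : (2 < K)%N by rewrite -(ltr_nat R); apply: lt_trans HK; lra.
have K0 : (0 < K)%N by lia.
set M := (K * K * K)%N; set m := (K * K)%N.
have M0 : (0 < M)%N by rewrite /M; lia.
have m0 : (0 < m)%N by rewrite /m; lia.
set kR : R := K%:R.
have kR0 : 0 < kR by rewrite ltr0n.
set ik := kR^-1.
have ik0 : 0 < ik by rewrite invr_gt0.
have ik1 : ik <= 1 by rewrite /ik invf_le1 // /kR ler1n.
have kik : kR * ik = 1 by rewrite mulfV // gt_eqF.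
have cK : c * ik < 1 / 2.
  rewrite ltr_pdivlMr // mulrC mulrA ltr_pdivrMr // mul1r; lra.
exists (M + m).+1, (Dmix R K M m); split => //; split; first exact: Dmix_dist.
move=> A /set0Pn [x1 x1A].
case: (boolP [exists x in A, (x <= M)%N]) => [/exists_inP [x0 x0A x0M] | /exists_inP nex].
- case: (arg_minnP (fun x : 'I_(M + m).+1 => nat_of_ord x) x0A) => w wA wmin.
  have wM : (w <= M)%N by have := wmin x0 x0A; lia.
  exists [set x : 'I_(M + m).+1 | (M < x)%N]; split.
    apply/set0Pn; exists ord_max; rewrite inE /=; lia.
  exists 1%N.
  have H1 : pk (Dmix R K M m) 1 [set x : 'I_(M + m).+1 | (M < x)%N] <= 0 + 1%:R * m%:R^-1.
    apply: (@pk_le _ _ _ _ _ _ _ ord0) => //; first by rewrite invr_ge0 ler0n.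
    by move=> v _; rewrite if_same addr0; apply: prA_F2.
  have H2 : ik <= pk (Dmix R K M m) 1 A.
    apply: le_trans (@pk_ge _ _ _ _ _ [set w] _ _); last by rewrite cards1.
      by rewrite big_set1; apply: prA_F1.
    by rewrite sub1set.
  have H4 : c * (0 + 1%:R * m%:R^-1) < ik.
    rewrite add0r mul1r /m natrM invfM mulrA -/kR -/ik.
    rewrite -[X in _ < X]mul1r (ltr_pM2r ik0); lra.
  exact: le_lt_trans (ler_wpM2l (ltW c0) H1) (lt_le_trans H4 H2).
- have AY : forall x, x \in A -> (M < x)%N.
    by move=> x xA; rewrite ltnNge; apply/negP => xM; apply: nex; exists x.
  exists [set x : 'I_(M + m).+1 | (x <= M)%N]; split.
    by apply/set0Pn; exists ord0; rewrite inE.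
  exists #|A|.
  have H1 : pk (Dmix R K M m) #|A| [set x : 'I_(M + m).+1 | (x <= M)%N] <=
      ik + #|A|%:R * ((1 - ik) / M%:R).
    apply: (@pk_le _ _ _ _ _ _ _ ord0); first exact: ltW.
      apply: divr_ge0; last exact: ler0n.
      rewrite subr_ge0 invf_le1 // ler1n //.
    by move=> v _; apply: prA_F3.
  have H2 : 1 <= pk (Dmix R K M m) #|A| A.
    apply: le_trans (@pk_ge _ _ _ _ _ A _ _) => //.
    apply: sum_prA_ge1; first exact: Dmix_dist.
    by apply/set0Pn; exists x1.
  have Am : (#|A| <= m)%N by apply: card_le_m.
  have H3 : #|A|%:R * ((1 - ik) / M%:R) <= ik.
    have e1 : (1 - ik) / M%:R <= M%:R^-1.
      rewrite -[X in _ <= X]mul1r; apply: ler_wpM2r; [by rewrite invr_ge0 ler0n| lra].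
    have e2 : (#|A|%:R : R) <= kR * kR by rewrite /kR -natrM ler_nat.
    apply: le_trans (ler_pM _ _ e2 e1) _.
    + exact: ler0n.
    + apply: divr_ge0; last exact: ler0n; lra.
    by rewrite /M !natrM -/kR !invfM !mulrA mulfK ?gt_eqF // mulfV ?gt_eqF // mul1r.
  have H4 : c * (ik + #|A|%:R * ((1 - ik) / M%:R)) < 1.
    have : c * (ik + #|A|%:R * ((1 - ik) / M%:R)) <= c * ik + c * ik.
      rewrite -mulrDr; apply: ler_wpM2l; [exact: ltW| by rewrite lerD2l].
    lra.
  exact: le_lt_trans (ler_wpM2l (ltW c0) H1) (lt_le_trans H4 H2).
Qed.
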